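(* Let $T$ be a tree and let $\bar T$ be its complement. Then $L(\bar T)^2$ is a clique (complete graph).
   Context: For a graph $H$, $L(H)^2$ denotes the square of the line graph of $H$: its vertices are the edges of $H$, and two distinct edges $e,f$ of $H$ are adjacent in $L(H)^2$ if they share an endpoint or some edge of $H$ joins an endpoint of $e$ to an endpoint of $f$. *)

(* Defs.v *)
From mathcomp Require Import all_boot.
Set Implicit Arguments. Unset Strict Implicit. Unset Printing Implicit Defensive.

Definition simple_graph (V : finType) (g : rel V) : Prop :=
  irreflexive g /\ symmetric g.

Definition connected_graph (V : finType) (g : rel V) : Prop :=
  forall x y : V, connect g x y.

Definition is_cycle (V : finType) (g : rel V) (x : V) (p : seq V) : bool :=
  [&& 2 <= size p, uniq (x :: p), path g x p & g (last x p) x].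

Definition acyclic (V : finType) (g : rel V) : Prop :=
  forall (x : V) (p : seq V), ~~ is_cycle g x p.

Definition is_tree (V : finType) (g : rel V) : Prop :=
  simple_graph g /\ connected_graph g /\ acyclic g.

Definition complement (V : finType) (g : rel V) : rel V :=
  fun x y => (x != y) && ~~ g x y.

Definition edges (V : finType) (g : rel V) : {set {set V}} :=
  [set A : {set V} | [exists u, exists v, g u v && (A == [set u; v])]].

(* Adjacency in L(H)^2 of two edges e f (assumed distinct): they share an
   endpoint or some edge of H joins an endpoint of e to an endpoint of f. *)
Definition sq_line_adj (V : finType) (g : rel V) (e f : {set V}) : bool :=
  [exists x in e, exists y in f, (x == y) || g x y].

Definition sq_line_graph_clique (V : finType) (g : rel V) : Prop :=
  forall e f : {set V}, e \in edges g -> f \in edges g -> e != f ->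
    sq_line_adj g e f.

(* Main.v *)
Require Import Defs.
From mathcomp Require Import all_boot.

Theorem lemma2 (V : finType) (t : rel V) :
  is_tree t -> sq_line_graph_clique (complement t).
Proof.
move=> [[irr sym] [_ acyc]] e f.
rewrite !inE => /existsP[a /existsP[b /andP[ab /eqP he]]].
move=> /existsP[c /existsP[d /andP[cd /eqP hf]]] nef.
case: (boolP (sq_line_adj (complement t) e f)) => // H; exfalso.
have nadj : forall x y, x \in e -> y \in f -> x != y /\ t x y.
  move=> x y xe yf; move: H; rewrite negb_exists_in => /forall_inP /(_ x xe).
  rewrite negb_exists_in => /forall_inP /(_ y yf).
  rewrite /complement; case: (x =P y) => //= _ ; case: (t x y) => //.
have ea : a \in e by rewrite he !inE eqxx.
have eb : b \in e by rewrite he !inE eqxx orbT.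
have fc : c \in f by rewrite hf !inE eqxx.
have fd : d \in f by rewrite hf !inE eqxx orbT.
case: (nadj a c ea fc) => ac tac.
case: (nadj a d ea fd) => ad tad.
case: (nadj b c eb fc) => bc tbc.
case: (nadj b d eb fd) => bd tbd.
move: ab cd; rewrite /complement => /andP[anb _] /andP[cnd _].
apply: (negP (acyc a [:: c; b; d])).
rewrite /is_cycle /= !inE !negb_or ac anb ad cnd bd (eq_sym c b) bc /=.
by rewrite tac (sym c b) tbc tbd (sym d a) tad.
Qed.
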